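(* Let $n,q\in\mathbb{N}$ with $2\le q<n$ and let $0<\varepsilon<1$. Put $t_1=\lfloor\frac{n-q}{2}\rfloor-\lceil\log_2\frac1\varepsilon\rceil-2$ and $t_2=\lceil\frac{n-q}{2}\rceil+\lceil\log_2\frac1\varepsilon\rceil+2$. Then $$\sum_{c=\max\{0,t_1\}}^{\min\{t_2,n-q\}}\binom{n-q}{c}\big(2^{\,n-c-q}-1\big)^{c}\;\ge\;(1-\varepsilon)\sum_{c=0}^{n-q}\binom{n-q}{c}\big(2^{\,n-c-q}-1\big)^{c}.$$
   Context: Standard notation; $\log_2$ is the base-2 logarithm and $0^0=1$. *)

(* Defs.v *)
From mathcomp Require Import all_boot all_order all_algebra.
From mathcomp Require Import all_classical all_reals all_analysis.
Import Order.TTheory GRing.Theory Num.Theory.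
Local Open Scope ring_scope.

Definition log2 {R : realType} (x : R) : R := ln x / ln 2.

(* term  C(n-q, c) * (2^(n-c-q) - 1)^c  as a natural number
   (n - c - q >= 0 whenever c <= n - q, so 2^(n-c-q) >= 1, no truncation) *)
Definition term8p12 (n q c : nat) : nat :=
  ('C(n - q, c) * (2 ^ (n - c - q) - 1) ^ c)%N.

(* Main.v *)
Require Import Defs.
From mathcomp Require Import all_boot all_order all_algebra.
From mathcomp Require Import all_classical all_reals all_analysis.
From mathcomp Require Import zify ring lra.
Import Order.TTheory GRing.Theory Num.Theory.
Local Open Scope nat_scope.

Lemma bern (b c : nat) : ((b+1) ^ c.+1 <= b ^ c.+1 + c.+1 * (b+1) ^ c).
Proof.
elim: c => [|c IH]; first by rewrite !expn1 expn0 muln1.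
have h1 : (b ^ c.+1 <= (b+1) ^ c.+1) by rewrite leq_exp2r // leq_addr.
have h2 := leq_mul (leqnn (b+1)) IH.
rewrite (expnS (b+1) c.+1) (expnS b c.+1) -/(expn (b+1) c.+1).
move: h1 h2; rewrite (expnS (b+1) c).
set X := (b+1) ^ c; set Y := b ^ c.+1. nia.
Qed.

Lemma bern2 (c0 c1 : nat) : (c0 <= c1) -> (2 ^ (c0*c1) <= 2 * (2 ^ c1 - 1) ^ c0).
Proof.
move=> h.
case: c0 h => [|k] h; first by rewrite mul0n expn0.
have ha : (2 * k.+1 <= 2 ^ c1).
  move: h; case: c1 => [//|c1'] h.
  have h' : (c1' < 2 ^ c1') by apply: ltn_expl.
  rewrite expnS; nia.
have b := bern (2 ^ c1 - 1) k.
have e : (2 ^ c1 - 1 + 1 = 2 ^ c1) by rewrite subnK // expn_gt0.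
rewrite e in b.
rewrite mulnC expnM.
rewrite (expnS (2 ^ c1) k) in b *.
move: b ha. set a := 2 ^ c1. set Z := (a - 1) ^ k.+1. set W := a ^ k. nia.
Qed.

Lemma bin_inc m c : (c.+1 <= m - c) -> ('C(m, c) <= 'C(m, c.+1)).
Proof.
move=> h; have e := mul_bin_left m c.
have : (c.+1 * 'C(m, c) <= c.+1 * 'C(m, c.+1)).
  rewrite e; exact: leq_mul.
by rewrite leq_pmul2l.
Qed.

Lemma bin_max m c : ('C(m, c) <= 'C(m, m./2)).
Proof.
have low : forall k c, (c + k = m./2) -> ('C(m, c) <= 'C(m, m./2)).
  elim=> [|k IH] c' h; first by rewrite -h addn0.
  apply: leq_trans (IH c'.+1 _); last by rewrite -h addSnnS.
  apply: bin_inc.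
  have : (m./2 + m./2 <= m).
    by rewrite addnn -[X in (_ <= X)](odd_double_half m) leq_addl.
  lia.
case: (leqP c m./2) => hc.
  apply: (low (m./2 - c)); lia.
case: (leqP c m) => hm; last by rewrite bin_small.
rewrite -(bin_sub hm); apply: (low (m./2 - (m - c))).
have : (m <= m./2 + m./2 + 1).
  by rewrite addnn -[X in (X <= _)](odd_double_half m) addnC leq_add2l leq_b1.
lia.
Qed.

Lemma geo N K : \sum_(0 <= c < N) (if c < K then 2 ^ c else 0) + 1 = 2 ^ (minn N K).
Proof.
elim: N => [|N IH]; first by rewrite big_nil min0n.
rewrite big_nat_recr //= -addnA [_ + 1]addnC addnA IH.
case: (ltnP N K) => h.
  have e1 : minn N K = N by lia.
  have e2 : minn N.+1 K = N.+1 by lia.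
  rewrite ?e1 ?e2 expnS; lia.
have -> : minn N.+1 K = K by lia.
by rewrite addn0; congr (2 ^ _); lia.
Qed.

Lemma geo_le N K : \sum_(0 <= c < N) (if c < K then 2 ^ c else 0) <= 2 ^ K.
Proof.
have := geo N K; have : 2 ^ minn N K <= 2 ^ K by rewrite leq_pexp2l // geq_minr.
lia.
Qed.

Lemma geo_rev m K : K <= m ->
  \sum_(0 <= c < m.+1) (if K < c then 2 ^ (m - c) else 0) <= 2 ^ (m - K).
Proof.
move=> hK; rewrite big_nat_rev /=.
rewrite (eq_big_nat _ _ (F2 := fun c => if c < m - K then 2 ^ c else 0)).
  exact: geo_le.
move=> c /andP[_ hc]; rewrite add0n subSS.
have -> : (K < m - c) = (c < m - K) by lia.
case: ifP => // _; congr (2 ^ _); lia.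
Qed.

Lemma term_ub n q c : term8p12 n q c <= 'C(n - q, c) * 2 ^ (c * (n - q - c)).
Proof.
rewrite /term8p12 subnAC leq_mul // mulnC expnM.
case: c => [|c]; first by rewrite !expn0.
by rewrite leq_exp2r // leq_subr.
Qed.

Lemma half_lem m c0 o : c0 + c0 + o = m -> o <= 1 -> m./2 = c0.
Proof.
move=> <-; case: o => [|[|//]] _.
  by rewrite addn0 addnn doubleK.
by rewrite addn1 addnn; exact: uphalf_double.
Qed.

Lemma low_pt n q l c c0 o : c0 + c0 + o = n - q -> o <= 1 -> c + l + 3 <= c0 ->
  2 ^ (l + 3) * 2 ^ c0 * term8p12 n q c <= 'C(n - q, c0) * 2 ^ (c0 * (c0 + o)) * 2 ^ c.
Proof.
move=> hm ho hc.
have ha := term_ub n q c.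
have hb := bin_max (n - q) c.
have hc0 : (n - q)./2 = c0 by exact: half_lem hm ho.
rewrite hc0 in hb.
have E : 2 ^ (l + 3) * 2 ^ c0 * 2 ^ (c * (n - q - c)) <= 2 ^ (c0 * (c0 + o)) * 2 ^ c.
  rewrite -!expnD leq_pexp2l //.
  rewrite -hm.
  have [d hd] : exists d, c0 = c + l + 3 + d by exists (c0 - (c + l + 3)); lia.
  subst c0. nia.
set X := 2 ^ (l + 3) * 2 ^ c0.
have h1 := leq_mul (leqnn X) ha.
have h2 := leq_mul (leqnn X) (leq_mul hb (leqnn (2 ^ (c * (n - q - c))))).
have h3 := leq_mul (leqnn ('C(n - q, c0))) E.
move: h1 h2 h3; rewrite /X.
set A := term8p12 n q c. set B := 'C(n - q, c). set C := 'C(n - q, c0).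
set P := 2 ^ (c * (n - q - c)). set Z := 2 ^ (c0 * (c0 + o)).
set Y1 := 2 ^ (l+3). set Y2 := 2 ^ c0. set W := 2 ^ c. nia.
Qed.

Lemma up_pt n q l c c0 o : c0 + c0 + o = n - q -> o <= 1 -> c0 + o + l + 3 <= c ->
  c <= n - q ->
  2 ^ (l + 3) * 2 ^ c0 * term8p12 n q c <= 'C(n - q, c0) * 2 ^ (c0 * (c0 + o)) * 2 ^ (n - q - c).
Proof.
move=> hm ho hc hcm.
have ha := term_ub n q c.
have hb := bin_max (n - q) c.
have hc0 : (n - q)./2 = c0 by exact: half_lem hm ho.
rewrite hc0 in hb.
have E : 2 ^ (l + 3) * 2 ^ c0 * 2 ^ (c * (n - q - c)) <= 2 ^ (c0 * (c0 + o)) * 2 ^ (n - q - c).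
  rewrite -!expnD leq_pexp2l //.
  rewrite -hm; rewrite -hm in hcm.
  have [e he] : exists e, c = c0 + o + l + 3 + e by exists (c - (c0 + o + l + 3)); lia.
  subst c.
  have [f hf] : exists f, c0 = l + 3 + e + f by exists (c0 - (l + 3 + e)); lia.
  rewrite (_ : c0 + c0 + o - (c0 + o + l + 3 + e) = f); last by lia.
  subst c0.
  nia.
set X := 2 ^ (l + 3) * 2 ^ c0.
have h1 := leq_mul (leqnn X) ha.
have h2 := leq_mul (leqnn X) (leq_mul hb (leqnn (2 ^ (c * (n - q - c))))).
have h3 := leq_mul (leqnn ('C(n - q, c0))) E.
move: h1 h2 h3; rewrite /X.
set A := term8p12 n q c. set B := 'C(n - q, c). set C := 'C(n - q, c0).
set P := 2 ^ (c * (n - q - c)). set Z := 2 ^ (c0 * (c0 + o)).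
set Y1 := 2 ^ (l+3). set Y2 := 2 ^ c0. set W := 2 ^ (n - q - c). nia.
Qed.

Lemma main_nat n q l c0 o : c0 + c0 + o = n - q -> o <= 1 ->
  2 ^ l * \sum_(0 <= c < (n - q).+1 | ~~ (((c + l + 3 <= c0) == false) && ((c0 + o + l + 3 <= c) == false))) term8p12 n q c
  <= \sum_(0 <= c < (n - q).+1) term8p12 n q c.
Proof.
move=> hm ho.
set m := n - q in hm *.
set c1 := c0 + o.
set T := \sum_(0 <= c < m.+1) term8p12 n q c.
set M := 'C(m, c0) * 2 ^ (c0 * c1).
have hc0m : c0 <= m by lia.
have hT : 'C(m, c0) * (2 ^ c1 - 1) ^ c0 <= T.
  have hin : c0 \in index_iota 0 m.+1 by rewrite mem_index_iota; lia.
  rewrite /T (bigD1_seq c0 hin (iota_uniq _ _)) /=.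
  apply: leq_trans (leq_addr _ _).
  rewrite /term8p12 subnAC -/m (_ : m - c0 = c1) //; lia.
have hM : M <= 2 * T.
  apply: leq_trans (leq_mul (leqnn 2) hT).
  rewrite /M mulnCA leq_mul //; apply: bern2; lia.
set Low := \sum_(0 <= c < m.+1) (if c + l + 3 <= c0 then term8p12 n q c else 0).
set Up := \sum_(0 <= c < m.+1) (if c1 + l + 3 <= c then term8p12 n q c else 0).
have hU : \sum_(0 <= c < m.+1 | ~~ (((c + l + 3 <= c0) == false) && ((c1 + l + 3 <= c) == false))) term8p12 n q c <= Low + Up.
  rewrite /Low /Up -big_split big_mkcond /=; apply: leq_sum => c _.
  case: (c + l + 3 <= c0); case: (c1 + l + 3 <= c) => /=; rewrite ?leq_addr ?leq_addl ?add0n //.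
have hLow : 2 ^ (l + 3) * 2 ^ c0 * Low <= M * 2 ^ c0.
  rewrite /Low big_distrr /=.
  apply: leq_trans (_ : \sum_(0 <= c < m.+1) M * (if c < c0 then 2 ^ c else 0) <= _).
    apply: leq_sum => c _; case: ifP => h; last by rewrite muln0.
    rewrite (_ : c < c0) ?h //; last by lia.
    rewrite /M /c1; exact: (@low_pt n q l c c0 o hm ho h).
  by rewrite -big_distrr leq_mul // geo_le.
have hUp : 2 ^ (l + 3) * 2 ^ c0 * Up <= M * 2 ^ c0.
  rewrite /Up big_distrr /=.
  apply: leq_trans (_ : \sum_(0 <= c < m.+1) M * (if c1 < c then 2 ^ (m - c) else 0) <= _).
    rewrite big_nat_cond [X in _ <= X]big_nat_cond; apply: leq_sum => c /andP[/andP[_ hcm] _]. case: ifP => h; last by rewrite muln0.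
    rewrite (_ : c1 < c) ?h //; last by lia.
    rewrite /M /c1; apply: (@up_pt n q l c c0 o hm ho); rewrite -/c1; lia.
  rewrite -big_distrr leq_mul // (_ : c0 = m - c1); last by lia.
  apply: geo_rev; lia.
have : 2 ^ (l + 3) * 2 ^ c0 * (Low + Up) <= 4 * T * 2 ^ c0.
  rewrite mulnDr; have : M * 2 ^ c0 <= 2 * T * 2 ^ c0 by rewrite leq_mul.
  lia.
rewrite -mulnA [2 ^ c0 * _]mulnC mulnA leq_pmul2r ?expn_gt0 //.
rewrite expnD => h.
apply: leq_trans (leq_mul (leqnn _) hU) _.
move: h; set P := 2 ^ l; set S := Low + Up. rewrite (_ : 2 ^ 3 = 8) //. lia.
Qed.

Local Open Scope ring_scope.

Theorem lemma8p12 (R : realType) (n q : nat) (eps : R) :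
  (2 <= q)%N -> (q < n)%N -> 0 < eps -> eps < 1 ->
  let L : int := Num.ceil (log2 (eps^-1)) in
  let t1 : int := ((n - q)./2)%:Z - L - 2 in
  let t2 : int := ((n - q)./2 + odd (n - q))%:Z + L + 2 in
  ((\sum_(0 <= c < (n - q).+1 | (t1 <= c%:Z)%R && (c%:Z <= t2)%R) term8p12 n q c)%:R
    : R)
  >= (1 - eps) * (\sum_(0 <= c < (n - q).+1) term8p12 n q c)%:R.
Proof.
move=> hq hqn he0 he1; cbv zeta.
set L := Num.ceil (log2 (eps^-1)).
set t1 : int := ((n - q)./2)%:Z - L - 2.
set t2 : int := ((n - q)./2 + odd (n - q))%:Z + L + 2.
have hln2 : 0 < ln (2 : R) by apply: ln_gt0; lra.
have hinv : 1 < eps^-1 by rewrite invf_gt1 //.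
have hlog : 0 < log2 (eps^-1) by rewrite /log2 divr_gt0 // ln_gt0.
have hLge : log2 (eps^-1) <= L%:~R by exact: Num.Theory.ceil_ge.
have L0 : 0 <= L by rewrite -(ler_int R); apply: le_trans hLge; lra.
have [l hl] : exists l : nat, L = l%:Z by exists `|L|%N; rewrite gez0_abs.
have heps : 1 <= eps * 2 ^+ l.
  have h1 : ln (eps^-1) <= ln ((2 : R) ^+ l).
    rewrite lnXn; last lra.
    move: hLge; rewrite /log2 hl ler_pdivrMr // => h.
    by move: h; rewrite pmulrn -mulr_natl.
  have p1 : 0 < eps^-1 by rewrite invr_gt0.
  have p2 : 0 < (2 : R) ^+ l by rewrite exprn_gt0 //; lra.
  rewrite ler_ln ?posrE // in h1.
  have := ler_wpM2l (ltW he0) h1; rewrite mulfV; last by rewrite gt_eqF.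
  by [].
set o := odd (n - q).
set c0 := (n - q)./2.
have hm : (c0 + c0 + o = n - q)%N by rewrite /c0 /o addnn addnC; exact: odd_double_half.
have ho : (o <= 1)%N by apply: leq_b1.
have key := @main_nat n q l c0 o hm ho.
have hf : forall c : nat, (~~ ((t1 <= c%:Z)%R && (c%:Z <= t2)%R)) =
   ~~ (((c + l + 3 <= c0)%N == false) && ((c0 + o + l + 3 <= c)%N == false)).
  move=> c; rewrite /t1 /t2 hl -/c0 -/o.
  move: ho; case: (o) => _; lia.
rewrite -(eq_bigl _ _ hf) in key.
set U := \sum_(0 <= c < (n - q).+1 | _) term8p12 n q c in key *.
have hTW : (\sum_(0 <= c < (n - q).+1) term8p12 n q c =
   \sum_(0 <= c < (n - q).+1 | (t1 <= c%:Z)%R && (c%:Z <= t2)%R) term8p12 n q c + U)%N.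
  by rewrite (bigID (fun c : nat => (t1 <= c%:Z)%R && (c%:Z <= t2)%R)).
move: key; rewrite hTW.
set W := \sum_(0 <= c < (n - q).+1 | _ && _) term8p12 n q c.
move=> key.
have kR : (2 : R) ^+ l * U%:R <= W%:R + U%:R.
  by rewrite -natrD -(natrX R 2 l) -natrM ler_nat.
rewrite natrD.
have hU0 : 0 <= (U%:R : R) by [].
have hp : 0 < (2 : R) ^+ l by rewrite exprn_gt0 //; lra.
nra.
Qed.
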